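(* Let $\mathcal{F}$ be a finite field and let $\mathcal{S}$ be a stabilizer code with parameters $[[n,k]]_{\mathcal{F}}$ (local-dimension given by $\mathcal{F}$) having $r$ linearly independent generators in the $\phi$ representation. Then there is a prescriptive (constructive) method to transform $\mathcal{S}$ into a local-dimension-invariant form, and this form yields a stabilizer code with parameters $[[n,n-r]]_{\mathcal{R}}$ for any choice of a finite commutative ring $\mathcal{R}$ as local-dimension.
   Context: An $n$-register generalized Pauli operator is a tensor product $\bigotimes_{t=1}^n X^{a_t}Z^{b_t}$ of powers of the shift operator $X$ and phase operator $Z$ of the local-dimension. Its $\phi$ representation is the vector $(a_1,\dots,a_n\,|\,b_1,\dots,b_n)$ of exponents; composition of Paulis corresponds to addition of these vectors, and $\phi_\infty$ denotes this representation with entries regarded as integers (no modular reduction). The symplectic product of $(\vec a\,|\,\vec b)$ and $(\vec a'\,|\,\vec b')$ is $\vec a\cdot\vec b'-\vec a'\cdot\vec b$; two Paulis commute over local-dimension $q$ iff their symplectic product is $0$ modulo $q$. A stabilizer code is specified by commuting generators on $n$ physical registers; $[[n,k]]$ means $n$ physical registers and $k$ logical (encoded) registers. A stabilizer code is called local-dimension-invariant (LDI) if $\phi_\infty(s_i)\odot\phi_\infty(s_j)=0$ exactly over the integers for all generators $s_i,s_j$, so the generators commute regardless of the local-dimension; an LDI form of $\mathcal{S}$ is such a set of generators that agrees with $\mathcal{S}$ over its original local-dimension. *)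

(* Defs.v *)
From HB Require Import structures.
From mathcomp Require Import all_boot all_order all_algebra.
Set Implicit Arguments. Unset Strict Implicit. Unset Printing Implicit Defensive.
Import Order.TTheory GRing.Theory Num.Theory.
Local Open Scope ring_scope.

(* phi representation of an n-register Pauli: a row vector (a_1..a_n | b_1..b_n)
   of length n + n; coordinates lshift n t = a_t (X exponent), rshift n t = b_t. *)

Definition symp (R : comPzRingType) (n : nat) (u v : 'rV[R]_(n + n)) : R :=
  \sum_(t < n) (u 0 (lshift n t) * v 0 (rshift n t)
                - v 0 (lshift n t) * u 0 (rshift n t)).

Definition reduce (R : pzRingType) (r m : nat) (M : 'M[int]_(r, m)) : 'M[R]_(r, m) :=
  map_mx (fun z : int => z%:~R) M.

(* G (rows = r generators in phi representation over R) is a stabilizer code with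
   parameters [[n,k]]_R: generators pairwise commute, they are independent
   (the stabilizer group they generate is a free R-module of rank r, i.e. has
   |R|^r elements), and k = n - r logical registers are encoded. *)
Arguments symp {R n}.
Definition stab_code (R : comPzRingType) (n k r : nat) (G : 'M[R]_(r, n + n)) : Prop :=
  [/\ forall i j : 'I_r, symp (row i G) (row j G) = 0,
      forall v : 'rV[R]_r, v *m G = 0 -> v = 0
    & k = (n - r)%N].

Definition LDI (n r : nat) (M : 'M[int]_(r, n + n)) : Prop :=
  forall i j : 'I_r, symp (row i M) (row j M) = 0.
Arguments stab_code {R} n k {r} G.
Arguments reduce {R r m} M.
Arguments LDI {n r} M.

(* Main.v *)
Require Import Defs.
From HB Require Import structures.
From mathcomp Require Import all_boot all_order all_algebra all_field.
Import Order.TTheory GRing.Theory Num.Theory.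
Local Open Scope ring_scope.
Set Implicit Arguments. Unset Strict Implicit. Unset Printing Implicit Defensive.

Section Asm.
Variables (R : pzRingType) (n : nat) (h : {set 'I_n}).

Definition xmx m (B : 'M[R]_(m, n + n)) : 'M[R]_(m, n) :=
  \matrix_(i, t) (if t \in h then B i (rshift n t) else B i (lshift n t)).
Definition zmx m (B : 'M[R]_(m, n + n)) : 'M[R]_(m, n) :=
  \matrix_(i, t) (if t \in h then - B i (lshift n t) else B i (rshift n t)).
Definition asm m (X Z : 'M[R]_(m, n)) : 'M[R]_(m, n + n) :=
  \matrix_(i, c) match split c with
                 | inl t => if t \in h then - Z i t else X i t
                 | inr t => if t \in h then X i t else Z i t end.

Lemma asm_l m (X Z : 'M[R]_(m, n)) i t :
  asm X Z i (lshift n t) = if t \in h then - Z i t else X i t.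
Proof.
rewrite mxE; case: split_ordP => j e; first by move/lshift_inj: e => ->.
by exfalso; move/(congr1 val): e => /= e; have := ltn_ord t; rewrite e ltnNge leq_addr.
Qed.
Lemma asm_r m (X Z : 'M[R]_(m, n)) i t :
  asm X Z i (rshift n t) = if t \in h then X i t else Z i t.
Proof.
rewrite mxE; case: split_ordP => j e; last by move/rshift_inj: e => ->.
by exfalso; move/(congr1 val): e => /= e; have := ltn_ord j; rewrite -e ltnNge leq_addr.
Qed.

Lemma asmK m (B : 'M[R]_(m, n + n)) : asm (xmx B) (zmx B) = B.
Proof.
apply/matrixP => i c; rewrite mxE; case: split_ordP => t -> ; rewrite !mxE;
  by case: (t \in h); rewrite ?opprK.
Qed.

Lemma asm00 m : asm (0 : 'M[R]_(m, n)) 0 = 0.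
Proof.
apply/matrixP => i c; rewrite !mxE; case: split => t; rewrite !mxE;
  by case: (t \in h); rewrite ?oppr0.
Qed.

Lemma xmxK m (X Z : 'M[R]_(m, n)) : xmx (asm X Z) = X.
Proof. by apply/matrixP => i t; rewrite mxE asm_l asm_r; case: (t \in h). Qed.
Lemma zmxK m (X Z : 'M[R]_(m, n)) : zmx (asm X Z) = Z.
Proof. by apply/matrixP => i t; rewrite mxE asm_l asm_r; case: (t \in h); rewrite ?opprK. Qed.

Lemma xmxM m p (A : 'M[R]_(p, m)) (B : 'M[R]_(m, n + n)) : xmx (A *m B) = A *m xmx B.
Proof.
apply/matrixP => i t; rewrite !mxE; case: ifP => ht;
  by apply: eq_bigr => k _; rewrite !mxE ht.
Qed.
Lemma zmxM m p (A : 'M[R]_(p, m)) (B : 'M[R]_(m, n + n)) : zmx (A *m B) = A *m zmx B.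
Proof.
apply/matrixP => i t; rewrite !mxE; case: ifP => ht;
  last by apply: eq_bigr => k _; rewrite !mxE ht.
by rewrite -sumrN; apply: eq_bigr => k _; rewrite !mxE ht mulrN.
Qed.

Lemma asm_mul_tr m p (X Z : 'M[R]_(m, n)) (Y W : 'M[R]_(p, n)) :
  asm X Z *m (asm Y W)^T = X *m Y^T + Z *m W^T.
Proof.
apply/matrixP => i j; rewrite !mxE big_split_ord /= -big_split /= -big_split /=.
apply: eq_bigr => t _; rewrite ![(_^T) _ _]mxE !asm_l !asm_r.
by case: (t \in h); rewrite ?mulrNN // addrC.
Qed.

End Asm.

Section Maps.
Variables (R : pzRingType) (n : nat) (h : {set 'I_n}).
Lemma reduce_xmx m (B : 'M[int]_(m, n + n)) : reduce (R:=R) (xmx h B) = xmx h (reduce B).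
Proof. by apply/matrixP => i t; rewrite !mxE; case: (t \in h); rewrite ?mxE ?intrN. Qed.
Lemma reduce_zmx m (B : 'M[int]_(m, n + n)) : reduce (R:=R) (zmx h B) = zmx h (reduce B).
Proof. by apply/matrixP => i t; rewrite !mxE; case: (t \in h); rewrite ?mxE ?intrN. Qed.
Lemma reduce_asm m (X Z : 'M[int]_(m, n)) : reduce (R:=R) (asm h X Z) = asm h (reduce X) (reduce Z).
Proof.
apply/matrixP => i c; rewrite !mxE; case: split_ordP => t _; rewrite !mxE;
  by case: (t \in h); rewrite ?mxE ?intrN.
Qed.
Lemma reduceM m p q (A : 'M[int]_(m, p)) (B : 'M[int]_(p, q)) :
  reduce (R:=R) (A *m B) = reduce A *m reduce B.
Proof. exact: (map_mxM (intr : {rmorphism int -> R})). Qed.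
Lemma reduceD m p (A B : 'M[int]_(m, p)) : reduce (R:=R) (A + B) = reduce A + reduce B.
Proof. by apply/matrixP => i j; rewrite !mxE intrD. Qed.
Lemma reduceN m p (A : 'M[int]_(m, p)) : reduce (R:=R) (- A) = - reduce A.
Proof. by apply/matrixP => i j; rewrite !mxE intrN. Qed.
Lemma reduceT m p (A : 'M[int]_(m, p)) : reduce (R:=R) A^T = (reduce A)^T.
Proof. by apply/matrixP => i j; rewrite !mxE. Qed.
Lemma reduce1 m : reduce (R:=R) (1 : 'M[int]_m) = 1.
Proof. by apply/matrixP => i j; rewrite !mxE; case: (i == j). Qed.
End Maps.

Lemma symp_asm (R : comPzRingType) n (h : {set 'I_n}) m p (X Z : 'M[R]_(m, n))
   (Y W : 'M[R]_(p, n)) i j :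
  symp (row i (asm h X Z)) (row j (asm h Y W)) = (X *m W^T - Z *m Y^T) i j.
Proof.
rewrite /symp !mxE -sumrB; apply: eq_bigr => t _; rewrite ![row _ _ _ _]mxE ![(_^T) _ _]mxE !asm_l !asm_r.
by case: (t \in h); rewrite ?mulNr ?mulrN ?opprK; [rewrite addrC mulrC | rewrite [Y _ _ * _]mulrC].
Qed.

Lemma gram_asm (R : comPzRingType) n (h : {set 'I_n}) r (B : 'M[R]_(r, n + n)) :
  (forall i j, symp (row i B) (row j B) = 0) ->
  xmx h B *m (zmx h B)^T - zmx h B *m (xmx h B)^T = 0.
Proof.
move=> iso; apply/matrixP => i j.
have := symp_asm h (xmx h B) (zmx h B) (xmx h B) (zmx h B) i j. by rewrite !asmK iso !mxE => <-.
Qed.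

Section Lagr.
Variables (F : finFieldType) (n r : nat) (B : 'M[F]_(r, n + n)).
Hypothesis iso : forall i j, symp (row i B) (row j B) = 0.
Hypothesis ind : forall v : 'rV[F]_r, v *m B = 0 -> v = 0.

Definition K (h : {set 'I_n}) := [set v : 'rV[F]_r | v *m xmx h B == 0].

Lemma iso_vec h (v w : 'rV[F]_r) : v *m xmx h B = 0 ->
  \sum_s (w *m xmx h B) 0 s * (v *m zmx h B) 0 s = 0.
Proof.
move=> hv; have G := gram_asm h iso.
have : (w *m (xmx h B *m (zmx h B)^T - zmx h B *m (xmx h B)^T) *m v^T) 0 0 = 0.
  by rewrite G mulmx0 mul0mx mxE.
rewrite mulmxBr mulmxBl !mulmxA -!mulmxA -!trmx_mul hv trmx0 !mulmx0 subr0 mulmxA mxE.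
move=> e; rewrite -[X in _ = X]e; apply: eq_bigr => s _; rewrite !mxE.
by [].
Qed.

Lemma xmx_flip (h : {set 'I_n}) t m (u : 'M[F]_(m, n + n)) i s :
  xmx [set s | (s \in h) != (s == t)] u i s =
  if s == t then (if t \in h then - zmx h u i t else zmx h u i t) else xmx h u i s.
Proof.
rewrite !mxE inE; have [->|ne] := eqVneq s t.
  by rewrite ?eqxx /=; case: (t \in h) => /=; rewrite ?opprK.
by case: (s \in h).
Qed.

Lemma K_step h v : v \in K h -> v != 0 -> exists h', (#|K h'| < #|K h|)%N.
Proof.
rewrite inE => /eqP hv nz.
have /existsP [t nzt] : [exists t, (v *m zmx h B) 0 t != 0].
  apply: contraNT nz => /existsPn allz; apply/eqP; apply: ind.
  rewrite -[v *m _](asmK h) xmxM zmxM hv.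
  have -> : v *m zmx h B = 0.
    by apply/matrixP => i t; rewrite ord1 [RHS]mxE; move: (allz t); rewrite negbK => /eqP.
  by rewrite asm00.
exists [set s | (s \in h) != (s == t)].
apply: proper_card; apply/properP; split.
  apply/subsetP => w; rewrite !inE => /eqP hw.
  have hw' : forall s, s != t -> (w *m xmx h B) 0 s = 0.
    move=> s ne; have := congr1 (fun M : 'M[F]_(1,n) => M 0 s) hw.
    by rewrite -xmxM xmx_flip (negbTE ne) xmxM [(0 : 'M[F]_(1,n)) 0 s]mxE.
  have := iso_vec w hv; rewrite (bigD1 t) //= big1 ?addr0; last first.
    by move=> s ne; rewrite hw' ?mulr0 ?mul0r.
  move/eqP; rewrite mulf_eq0 (negbTE nzt) orbF => /eqP ht.
  apply/eqP/matrixP => i s; rewrite ord1 [RHS]mxE.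
  by have [->|ne] := eqVneq s t; [exact: ht | exact: hw'].
exists v; first by rewrite inE hv.
rewrite inE; apply/negP => /eqP e; have := congr1 (fun M : 'M[F]_(1,n) => M 0 t) e.
rewrite -xmxM xmx_flip eqxx zmxM [(0 : 'M[F]_(1,n)) 0 t]mxE.
by case: (t \in h) => /eqP; rewrite ?oppr_eq0 (negbTE nzt).
Qed.

Lemma lagrangian : exists h : {set 'I_n}, forall v : 'rV[F]_r, v *m xmx h B = 0 -> v = 0.
Proof.
case: (@arg_minnP _ set0 xpredT (fun h => #|K h|) isT) => hm _ hmin.
exists hm => v hv; apply/eqP/negPn/negP => nz.
have vK : v \in K hm by rewrite inE hv.
have [h' hlt] := K_step vK nz.
by have := hmin h' isT; rewrite leqNgt hlt.
Qed.

End Lagr.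

Lemma trmxB' (R : pzRingType) m p (A C : 'M[R]_(m, p)) : (A - C)^T = A^T - C^T.
Proof. by apply/matrixP => i j; rewrite !mxE. Qed.

Lemma colsub_mul (R : pzRingType) m p q k (f : 'I_k -> 'I_q) (A : 'M[R]_(m, p)) (C : 'M[R]_(p, q)) :
  colsub f (A *m C) = A *m colsub f C.
Proof. by apply/matrixP => i j; rewrite !mxE; apply: eq_bigr => l _; rewrite !mxE. Qed.

Lemma colsubB (R : pzRingType) m q k (f : 'I_k -> 'I_q) (A C : 'M[R]_(m, q)) :
  colsub f (A - C) = colsub f A - colsub f C.
Proof. by apply/matrixP => i j; rewrite !mxE. Qed.

Lemma reduce_colsub (R : pzRingType) m q k (f : 'I_k -> 'I_q) (A : 'M[int]_(m, q)) :
  reduce (R:=R) (colsub f A) = colsub f (reduce A).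
Proof. by apply/matrixP => i j; rewrite !mxE. Qed.

Lemma reduceZ (R : pzRingType) m q (a : int) (A : 'M[int]_(m, q)) :
  reduce (R:=R) (a *: A) = a%:~R *: reduce A.
Proof. by apply/matrixP => i j; rewrite !mxE intrM. Qed.

Definition Pf r n (f : 'I_r -> 'I_n) : 'M[int]_(r, n) := \matrix_(k, t) ((f k == t)%:R).

Lemma mul_Pf r n m (f : 'I_r -> 'I_n) (A : 'M[int]_(m, n)) : A *m (Pf f)^T = colsub f A.
Proof.
apply/matrixP => i k; rewrite !mxE (bigD1 (f k)) //= big1 => [|t ne].
  by rewrite !mxE eqxx mulr1 addr0.
by rewrite !mxE eq_sym (negbTE ne) mulr0.
Qed.

Lemma colsub_Pf r n (f : 'I_r -> 'I_n) : injective f -> colsub f (Pf f) = 1.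
Proof. by move=> finj; apply/matrixP => i j; rewrite !mxE (inj_eq finj). Qed.

Definition Up r (G : 'M[int]_r) : 'M[int]_r := \matrix_(i, j) (if (i < j)%N then G i j else 0).

Lemma antisym_fix r (G : 'M[int]_r) : G^T = - G -> (forall i, G i i = 0) ->
  G - Up G + (Up G)^T = 0.
Proof.
move=> asy dg; apply/matrixP => i j; rewrite !mxE.
have := congr1 (fun M : 'M[int]_r => M i j) asy; rewrite !mxE => Gji.
case: (ltngtP i j) => [lt|gt|eq].
- by rewrite subrr addr0.
- by rewrite subr0 Gji subrr.
- have e : i = j by apply: val_inj. by rewrite e dg subr0 addr0.
Qed.

Lemma zz (V : zmodType) (a b u v : V) : (a - u) - (b - v) = a - b - u + v.
Proof. by rewrite opprB addrA addrAC (addrAC a). Qed.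

Lemma finv_pow (F : finFieldType) (x : F) : x != 0 -> exists k, x ^+ k * x = 1.
Proof.
move=> x0; exists (#|F| - 2)%N.
have c1 : (1 < #|F|)%N by apply/card_gt1P; exists 0, 1; rewrite !inE eq_sym oner_neq0.
have hN : #|F| = (#|F| - 2).+2 by rewrite -addn2 subnK.
apply: (mulIf x0); rewrite mul1r -!exprSr -hN; exact: expf_card.
Qed.
Unset Implicit Arguments.
Theorem theorem3 (F : finFieldType) (n k r : nat) (S : 'M[int]_(r, n + n)) :
  stab_code n k (reduce (R:=F) S) ->
  exists M : 'M[int]_(r, n + n),
    [/\ LDI M,
        (reduce (R:=F) M == reduce (R:=F) S)%MS
      & forall R : finComNzRingType, stab_code n (n - r) (reduce (R:=R) M)].
Proof.
case=> iso ind _.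
set B := reduce (R:=F) S.
have [h hX] := lagrangian iso ind.
set X := xmx h B.
have fX : row_full X^T by rewrite /row_full mxrank_tr; exact: (inj_row_free hX).
set f := fullrankfun fX.
have finj : injective f by apply: fullrankfun_inj.
have Du : colsub f X \in unitmx.
  have := fullrowsub_unit fX; rewrite -unitmx_tr.
  by rewrite (_ : (rowsub f X^T)^T = colsub f X) //; apply/matrixP => i j; rewrite !mxE.
set Di := colsub f (xmx h S).
have rDi : reduce (R:=F) Di = colsub f X by rewrite /Di reduce_colsub reduce_xmx.
have dF : ((\det Di)%:~R : F) = \det (colsub f X).
  rewrite -rDi; exact: (esym (det_map_mx (intr : {rmorphism int -> F}) Di)).
have d0 : \det (colsub f X) != 0 by rewrite -unitfE -unitmxE.
have [kk hkk] := finv_pow d0.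
set e := (\det Di) ^+ kk.
have eF : (e%:~R : F) = (\det (colsub f X))^-1.
  apply: (mulIf d0); rewrite mulVf //.
  have intrX : forall (z : int) (m : nat), ((z ^+ m)%:~R : F) = z%:~R ^+ m.
    by move=> z; elim=> [|m IH]; rewrite ?expr0 // !exprS intrM IH.
  by rewrite /e intrX dF.
set Li := e *: (\adj Di *m S).
set N := invmx (colsub f X) *m B.
have rLi : reduce (R:=F) Li = N.
  rewrite /N /invmx Du /Li reduceZ reduceM eF scalemxAl; congr (_ *: _ *m _).
  rewrite -rDi; exact: (map_mx_adj (intr : {rmorphism int -> F}) Di).
set Xl := xmx h Li.
set Zl := zmx h Li.
have rXl : reduce (R:=F) Xl = xmx h N by rewrite /Xl reduce_xmx rLi.
have rZl : reduce (R:=F) Zl = zmx h N by rewrite /Zl reduce_zmx rLi.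
set P := Pf f.
set Xm := Xl - (colsub f Xl - 1) *m P.
have cXm : colsub f Xm = 1.
  by rewrite /Xm colsubB colsub_mul colsub_Pf // mulmx1 opprB addrC subrK.
have XP : Xm *m P^T = 1 by rewrite mul_Pf cXm.
have rcX : reduce (R:=F) (colsub f Xl) = 1.
  by rewrite reduce_colsub rXl /N xmxM colsub_mul mulVmx.
have rXm : reduce (R:=F) Xm = xmx h N.
  by rewrite /Xm reduceD reduceN reduceM reduceD reduceN reduce1 rcX subrr mul0mx oppr0 addr0 rXl.
clearbody Xm Zl.
have GN : xmx h N *m (zmx h N)^T - zmx h N *m (xmx h N)^T = 0.
  have G := gram_asm h iso.
  transitivity (invmx (colsub f X) *m (xmx h B *m (zmx h B)^T - zmx h B *m (xmx h B)^T)
                 *m (invmx (colsub f X))^T); last by rewrite G mulmx0 mul0mx.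
  by rewrite /N xmxM zmxM !trmx_mul mulmxBr mulmxBl !mulmxA.
set G0 := Xm *m Zl^T - Zl *m Xm^T.
have rG0 : reduce (R:=F) G0 = 0.
  by rewrite /G0 reduceD reduceN !reduceM !reduceT rXm rZl.
set U := Up G0.
have rU : reduce (R:=F) U = 0.
  apply/matrixP => i j; rewrite /U !mxE; case: ifP => _; last by [].
  by have := congr1 (fun M : 'M[F]_r => M i j) rG0; rewrite !mxE.
set Zm := Zl - U^T *m P.
have rZm : reduce (R:=F) Zm = zmx h N.
  by rewrite /Zm reduceD reduceN reduceM reduceT rU trmx0 mul0mx oppr0 addr0 rZl.
have GM : Xm *m Zm^T - Zm *m Xm^T = 0.
  have PX : P *m Xm^T = 1 by rewrite -[P]trmxK -trmx_mul XP trmx1.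
  rewrite /Zm trmxB' trmx_mul trmxK mulmxBr mulmxBl mulmxA XP mul1mx -mulmxA PX mulmx1.
  rewrite zz; apply: antisym_fix.
    by rewrite /G0 trmxB' !trmx_mul !trmxK opprB.
  move=> i; rewrite /G0 !mxE; apply/eqP; rewrite subr_eq0; apply/eqP; apply: eq_bigr => t _.
  by rewrite !mxE mulrC.
set M := asm h Xm Zm.
set Q := (asm h P 0)^T.
have MQ : M *m Q = 1 by rewrite /M /Q asm_mul_tr XP trmx0 mulmx0 addr0.
have rM : reduce (R:=F) M = N by rewrite /M reduce_asm rXm rZm asmK.
exists M; split.
- by move=> i j; rewrite /M symp_asm GM mxE.
- rewrite rM /N; apply/eqmxP; apply: eqmxMfull.
  by rewrite row_full_unit unitmx_inv.
- move=> R; split => //.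
  + move=> i j; rewrite /M reduce_asm symp_asm.
    have := congr1 (fun A : 'M[int]_r => reduce (R:=R) A) GM.
    rewrite reduceD reduceN !reduceM !reduceT => ->.
    by rewrite !mxE.
  + move=> v hv; transitivity (v *m reduce (R:=R) (M *m Q)); first by rewrite MQ reduce1 mulmx1.
    by rewrite reduceM mulmxA hv mul0mx.
Qed.
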